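(* Let $\Gamma$ be a Deza graph with parameters $(n,k,k-1,a)$, $k>1$, $\beta=1$. If $x$ is an $A$-vertex of $\Gamma$, then $N(x)\setminus\{x_b\}=N(x_b)\setminus\{x\}$.
   Context: A Deza graph with parameters $(n,k,b,a)$, $a\le b$, is a $k$-regular graph on $n$ vertices in which any two distinct vertices have $a$ or $b$ common neighbours; $\beta$ is the number of vertices $u\ne v$ with exactly $b$ common neighbours with a given vertex $v$ (independent of $v$). Since $\beta=1$, for each vertex $x$ let $x_b$ denote the unique vertex having $b=k-1$ common neighbours with $x$. $N(x)$ is the set of neighbours of $x$. A vertex $x$ is an $A$-vertex if $x$ is adjacent to $x_b$, and an $NA$-vertex otherwise. *)

(* Defs.v *)
From mathcomp Require Import all_boot.
Set Implicit Arguments. Unset Strict Implicit. Unset Printing Implicit Defensive.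

Definition simple_graph (T : finType) (e : rel T) : Prop :=
  symmetric e /\ irreflexive e.

Definition nbhd (T : finType) (e : rel T) (x : T) : {set T} := [set y | e x y].

Definition ncommon (T : finType) (e : rel T) (x y : T) : nat :=
  #|nbhd e x :&: nbhd e y|.

Definition deza_graph (T : finType) (e : rel T) (n k b a : nat) : Prop :=
  [/\ simple_graph e, #|T| = n, a <= b,
      (forall x, #|nbhd e x| = k) &
      (forall x y, x != y -> ncommon e x y = a \/ ncommon e x y = b)].

Definition bset (T : finType) (e : rel T) (b : nat) (v : T) : {set T} :=
  [set u | (u != v) && (ncommon e v u == b)].

Definition has_beta (T : finType) (e : rel T) (b beta : nat) : Prop :=
  forall v, #|bset e b v| = beta.

(* Main.v *)
Require Import Defs.
From mathcomp Require Import all_boot.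

Set Implicit Arguments.
Lemma side (T : finType) (e : rel T) (k : nat) (x y : T) :
  irreflexive e -> #|nbhd e x| = k -> e x y -> ncommon e x y = k.-1 ->
  nbhd e x :&: nbhd e y = nbhd e x :\ y.
Proof.
move=> irr hk exy hc.
have hy : y \in nbhd e x by rewrite inE.
have hcard : #|nbhd e x :\ y| = k.-1.
  by move: (cardsD1 y (nbhd e x)); rewrite hy hk add1n => ->.
apply/eqP; rewrite eqEcard; apply/andP; split.
  apply/subsetP=> z; rewrite !inE => /andP [hz1 hz2]; rewrite hz1 andbT.
  by apply/eqP=> Ez; subst z; rewrite irr in hz2.
by rewrite hcard -hc.
Qed.

Theorem lemma2 (T : finType) (e : rel T) (n k a : nat) (x xb : T) :
  deza_graph e n k k.-1 a -> 1 < k -> has_beta e k.-1 1 ->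
  xb \in bset e k.-1 x ->
  e x xb ->
  nbhd e x :\ xb = nbhd e xb :\ x.
Proof.
move=> [[sym irr] _ _ hk _] _ _ hb exb.
move: hb; rewrite inE => /andP [_ /eqP hc].
have exb' : e xb x by rewrite sym.
have hc' : ncommon e xb x = k.-1 by rewrite /ncommon setIC.
by rewrite -(side irr (hk x) exb hc) -(side irr (hk xb) exb' hc') setIC.
Qed.
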